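(* Let $\gamma_a,\gamma_s>0$, $\lambda\ge0$, $q>0$, $\sigma_B>0$, $\varepsilon_a\in(0,2)$, and let $\beta_a,\beta_s:\mathbb R\to\mathbb R$ be globally Lipschitz continuous with $\beta_a\ge0$, $\beta_s>0$. Define \[ f_1(T_a,T_s)=\tfrac{1}{\gamma_a}\big[-\lambda(T_a-T_s)+\varepsilon_a\sigma_B|T_s|^3T_s-2\varepsilon_a\sigma_B|T_a|^3T_a+q\beta_a(T_a)\big], \] \[ f_2(T_a,T_s)=\tfrac{1}{\gamma_s}\big[-\lambda(T_s-T_a)-\sigma_B|T_s|^3T_s+\varepsilon_a\sigma_B|T_a|^3T_a+q\beta_s(T_s)\big], \] and, with $\overline{\mathcal Q}=[0,+\infty)^2$, let $P_+=\{(T_a,T_s)\in\overline{\mathcal Q}: f_1(T_a,T_s)\ge0,\ f_2(T_a,T_s)\ge0\}$ and $P_-=\{(T_a,T_s)\in\overline{\mathcal Q}: f_1(T_a,T_s)\le0,\ f_2(T_a,T_s)\le0\}$. Let $(T_a,T_s)$ be the solution of $T_a'=f_1(T_a,T_s)$, $T_s'=f_2(T_a,T_s)$, $(T_a,T_s)(0)=(T_a^{(0)},T_s^{(0)})$. If $(T_a^{(0)},T_s^{(0)})\in P_+$, then both $t\mapsto T_a(t)$ and $t\mapsto T_s(t)$ are nondecreasing; if $(T_a^{(0)},T_s^{(0)})\in P_-$, then both are nonincreasing. *)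

(* Defs.v *)
From Stdlib Require Import Reals.
From Coquelicot Require Import Coquelicot.
Open Scope R_scope.

Definition globally_lipschitz (b : R -> R) : Prop :=
  exists L : R, forall x y : R, Rabs (b x - b y) <= L * Rabs (x - y).

Definition f1 (ga lam q sB ea : R) (ba : R -> R) (Ta Ts : R) : R :=
  / ga * ( - lam * (Ta - Ts) + ea * sB * (Rabs Ts ^ 3 * Ts)
           - 2 * ea * sB * (Rabs Ta ^ 3 * Ta) + q * ba Ta ).

Definition f2 (gs lam q sB ea : R) (bs : R -> R) (Ta Ts : R) : R :=
  / gs * ( - lam * (Ts - Ta) - sB * (Rabs Ts ^ 3 * Ts)
           + ea * sB * (Rabs Ta ^ 3 * Ta) + q * bs Ts ).

Definition P_plus ga gs lam q sB ea ba bs (Ta Ts : R) : Prop :=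
  0 <= Ta /\ 0 <= Ts /\
  0 <= f1 ga lam q sB ea ba Ta Ts /\ 0 <= f2 gs lam q sB ea bs Ta Ts.

Definition P_minus ga gs lam q sB ea ba bs (Ta Ts : R) : Prop :=
  0 <= Ta /\ 0 <= Ts /\
  f1 ga lam q sB ea ba Ta Ts <= 0 /\ f2 gs lam q sB ea bs Ta Ts <= 0.

Definition is_solution ga gs lam q sB ea ba bs (tau : Rbar) (Ta0 Ts0 : R)
  (Ta Ts : R -> R) : Prop :=
  Ta 0 = Ta0 /\ Ts 0 = Ts0 /\
  filterlim Ta (at_right 0) (locally (Ta 0)) /\
  filterlim Ts (at_right 0) (locally (Ts 0)) /\
  (forall t : R, 0 < t -> Rbar_lt t tau ->
     is_derive Ta t (f1 ga lam q sB ea ba (Ta t) (Ts t)) /\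
     is_derive Ts t (f2 gs lam q sB ea bs (Ta t) (Ts t))).

(* Main.v *)
Require Import Defs.
From Stdlib Require Import Reals Lra Psatz.
From Coquelicot Require Import Coquelicot.
Open Scope R_scope.

Definition phi (z : R) := Rabs z ^ 3 * z.

Lemma phi_mono a b : a <= b -> phi a <= phi b.
Proof.
  intros H; unfold phi.
  destruct (Rle_dec 0 a); destruct (Rle_dec 0 b).
  - rewrite !Rabs_pos_eq by lra. assert (0 <= b - a) by lra.
    cut (0 <= b^3*b - a^3*a). lra.
    replace (b^3*b - a^3*a) with ((b-a)*((b+a)*(b*b+a*a))) by ring.
    apply Rmult_le_pos; [lra|]; apply Rmult_le_pos; nra.
  - exfalso; apply n; lra.
  - rewrite Rabs_left by lra. rewrite Rabs_pos_eq by lra. nra.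
  - rewrite !Rabs_left by lra.
    assert (0 <= b - a) by lra.
    assert (0 <= -(b+a)) by lra.
    assert (0 <= (b-a)*(-(b+a))) by nra.
    cut (0 <= (-b)^3*b - (-a)^3*a). lra.
    replace ((-b)^3*b - (-a)^3*a) with ((b-a)*(-(b+a))*(b*b+a*a)) by ring.
    nra.
Qed.

Lemma phi_lip_aux a b M : b <= a -> Rabs a <= M -> Rabs b <= M ->
  phi a - phi b <= 4 * M^3 * (a - b).
Proof.
  intros H Ha Hb; unfold phi.
  assert (HM : 0 <= M) by (pose proof (Rabs_pos a); lra).
  assert (HM3 : 0 <= M^3) by (apply pow_le; lra).
  destruct (Rle_dec 0 b).
  - rewrite !Rabs_pos_eq in * by lra.
    replace (a^3*a - b^3*b) with ((a-b)*((a+b)*(a*a+b*b))) by ring.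
    assert (0 <= a - b) by lra.
    assert ((a+b)*(a*a+b*b) <= 4*M^3).
    { assert (a*a <= M*M) by nra. assert (b*b <= M*M) by nra.
      assert (0 <= a*a+b*b) by nra.
      apply Rle_trans with ((2*M)*(a*a+b*b)). apply Rmult_le_compat_r; lra.
      simpl; nra. }
    nra.
  - destruct (Rle_dec 0 a).
    + rewrite Rabs_pos_eq in * by lra. rewrite Rabs_left in * by lra.
      assert (a^3*a <= M^3 * a).
      { assert (a^3 <= M^3) by (apply pow_incr; lra). nra. }
      assert (-((-b)^3*b) <= M^3 * (-b)).
      { assert ((-b)^3 <= M^3) by (apply pow_incr; lra).
        replace (-((-b)^3*b)) with ((-b)^3*(-b)) by ring.
        assert (0 <= (-b)^3) by (apply pow_le; lra). nra. }
      assert (0 <= M^3*(a-b)) by (apply Rmult_le_pos; lra).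
      lra.
    + rewrite !Rabs_left in * by lra.
      replace ((-a)^3*a - (-b)^3*b) with ((a-b)*(-(a+b))*(a*a+b*b)) by ring.
      assert (0 <= a - b) by lra.
      assert ((-(a+b))*(a*a+b*b) <= 4*M^3).
      { assert (a*a <= M*M) by nra. assert (b*b <= M*M) by nra.
        assert (0 <= a*a+b*b) by nra.
        apply Rle_trans with ((2*M)*(a*a+b*b)). apply Rmult_le_compat_r; lra.
        simpl; nra. }
      nra.
Qed.

Lemma phi_lip a b M : Rabs a <= M -> Rabs b <= M ->
  Rabs (phi a - phi b) <= 4 * M^3 * Rabs (a - b).
Proof.
  intros Ha Hb.
  destruct (Rle_dec b a).
  - pose proof (phi_mono b a r). pose proof (phi_lip_aux a b M r Ha Hb).
    rewrite !Rabs_pos_eq by lra. lra.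
  - assert (a <= b) by lra.
    pose proof (phi_mono a b H). pose proof (phi_lip_aux b a M H Hb Ha).
    rewrite Rabs_left1 by lra. rewrite (Rabs_left1 (a - b)) by lra. lra.
Qed.

Definition nm (z : R) := Rmax 0 (- z).
Definition gg (z : R) := nm z * nm z.

Lemma gg_quad z h : Rabs (gg (z + h) - gg z + 2 * nm z * h) <= h * h.
Proof.
  unfold gg, nm. unfold Rmax.
  destruct (Rle_dec 0 (- (z + h))); destruct (Rle_dec 0 (-z)).
  - replace ((- (z + h) * - (z + h) - - z * - z + 2 * - z * h)) with (h*h) by ring.
    rewrite Rabs_pos_eq; nra.
  - apply Rabs_le; nra.
  - apply Rabs_le; nra.
  - apply Rabs_le; nra.
Qed.

Lemma gg_derive z : is_derive gg z (-2 * nm z).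
Proof.
  apply is_derive_Reals. intros e He.
  exists (mkposreal e He). intros h Hh Hlt. simpl in Hlt.
  pose proof (gg_quad z h) as Q.
  replace ((gg (z + h) - gg z) / h - -2 * nm z) with ((gg (z + h) - gg z + 2 * nm z * h) / h)
    by (field; auto).
  unfold Rdiv. rewrite Rabs_mult, Rabs_inv.
  assert (0 < Rabs h) by (apply Rabs_pos_lt; auto).
  apply Rle_lt_trans with (Rabs h).
  - apply Rmult_le_reg_r with (Rabs h); auto.
    rewrite Rmult_assoc, Rinv_l by lra. rewrite Rmult_1_r.
    replace (Rabs h * Rabs h) with (h * h); auto.
    rewrite <- Rabs_mult. rewrite Rabs_pos_eq; nra.
  - auto.
Qed.

Definition RC (f : R -> R) := forall e, 0 < e -> exists d, 0 < d /\
  forall s, 0 < s < d -> Rabs (f s - f 0) < e.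

Lemma RC_of_filterlim f : filterlim f (at_right 0) (locally (f 0)) -> RC f.
Proof.
  intros H e He.
  destruct (H _ (locally_ball (f 0) (mkposreal e He))) as [d Hd].
  exists d. split. apply cond_pos. intros s Hs.
  assert (B : ball 0 d s).
  { unfold ball; simpl; unfold AbsRing_ball, abs, minus, plus, opp; simpl.
    rewrite Ropp_0, Rplus_0_r, Rabs_pos_eq; lra. }
  specialize (Hd s B (proj1 Hs)).
  unfold ball in Hd; simpl in Hd; unfold AbsRing_ball, abs, minus, plus, opp in Hd; simpl in Hd.
  exact Hd.
Qed.

Lemma cont_eps f x : ex_derive f x -> forall e, 0 < e -> exists d, 0 < d /\
  forall y, Rabs (y - x) < d -> Rabs (f y - f x) < e.
Proof.
  intros H e He. pose proof (ex_derive_continuous f x H) as C.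
  destruct (C _ (locally_ball (f x) (mkposreal e He))) as [d Hd].
  exists d. split. apply cond_pos. intros y Hy.
  apply (Hd y). exact Hy.
Qed.

Lemma cpt_of_derive f x : ex_derive f x -> continuity_pt f x.
Proof.
  intros H. apply continuity_pt_filterlim. apply (ex_derive_continuous f x H).
Qed.

Lemma bounded_RC f T : 0 < T -> RC f -> (forall t, 0 < t <= T -> ex_derive f t) ->
  exists M, forall t, 0 <= t <= T -> Rabs (f t) <= M.
Proof.
  intros HT Hr Hd.
  destruct (Hr 1 Rlt_0_1) as [d [Hd0 Hd1]].
  set (a := Rmin (d/2) T).
  assert (Ha : 0 < a) by (unfold a; apply Rmin_pos; lra).
  assert (HaT : a <= T) by (unfold a; apply Rmin_r).
  assert (Had : a <= d/2) by (unfold a; apply Rmin_l).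
  assert (Hc : forall c, a <= c <= T -> continuity_pt f c).
  { intros c Hc. apply cpt_of_derive, Hd. lra. }
  destruct (continuity_ab_maj f a T HaT Hc) as [Mx [HMx _]].
  destruct (continuity_ab_min f a T HaT Hc) as [mx [Hmx _]].
  exists (Rmax (Rabs (f 0) + 1) (Rmax (Rabs (f Mx)) (Rabs (f mx)))).
  intros t Ht.
  destruct (Rle_dec a t).
  - specialize (HMx t (conj r (proj2 Ht))). specialize (Hmx t (conj r (proj2 Ht))).
    apply Rle_trans with (Rmax (Rabs (f Mx)) (Rabs (f mx))); [|apply Rmax_r].
    apply Rabs_le. pose proof (Rle_abs (f Mx)). pose proof (Rle_abs (- f mx)).
    rewrite Rabs_Ropp in H0.
    pose proof (Rmax_l (Rabs (f Mx)) (Rabs (f mx))).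
    pose proof (Rmax_r (Rabs (f Mx)) (Rabs (f mx))). lra.
  - apply Rle_trans with (Rabs (f 0) + 1); [|apply Rmax_l].
    destruct (Req_dec t 0).
    + subst. lra.
    + assert (Rabs (f t - f 0) < 1) by (apply Hd1; lra).
      pose proof (Rabs_triang_inv (f t) (f 0)). lra.
Qed.
Lemma dR_minus f g t a b : is_derive f t a -> is_derive g t b -> is_derive (fun x => f x - g x) t (a - b).
Proof. intros. exact (is_derive_minus _ _ _ _ _ H H0). Qed.
Lemma dR_plus f g t a b : is_derive f t a -> is_derive g t b -> is_derive (fun x => f x + g x) t (a + b).
Proof. intros. exact (is_derive_plus _ _ _ _ _ H H0). Qed.
Lemma dR_mult f g t a b : is_derive f t a -> is_derive g t b -> is_derive (fun x => f x * g x) t (a * g t + f t * b).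
Proof. intros. exact (is_derive_mult _ _ _ _ _ H H0 Rmult_comm). Qed.
Lemma dR_comp f g t a b : is_derive g (f t) b -> is_derive f t a -> is_derive (fun x => g (f x)) t (a * b).
Proof. intros. exact (is_derive_comp _ _ _ _ _ H H0). Qed.
Lemma dR_shift (f : R -> R) (t h a : R) : is_derive f (t + h) a -> is_derive (fun x => f (x + h)) t a.
Proof. intros. assert (Hd : is_derive (fun x : R => x + h) t 1).
  { replace 1 with (1 + 0) by ring. apply dR_plus. apply (is_derive_id (K:=R_AbsRing)). apply (is_derive_const (V:=R_NormedModule)). }
  pose proof (dR_comp (fun x => x + h) f t 1 a H Hd). replace a with (1 * a) by ring. exact H0. Qed.

Lemma nm_nonneg z : 0 <= nm z.
Proof. unfold nm; apply Rmax_l. Qed.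
Lemma nm_pos z : 0 <= z -> nm z = 0.
Proof. intros; unfold nm, Rmax; destruct (Rle_dec 0 (-z)); lra. Qed.
Lemma nm_neg z : z < 0 -> nm z = - z.
Proof. intros; unfold nm, Rmax; destruct (Rle_dec 0 (-z)); lra. Qed.
Lemma nm_min b b' : Rabs (Rmin b b' - b') = nm (b - b').
Proof.
  unfold Rmin. destruct (Rle_dec b b').
  - destruct (Req_dec b b'). subst. rewrite nm_pos by lra. replace (b'-b') with 0 by ring. apply Rabs_R0.
    rewrite nm_neg by lra. rewrite Rabs_left; lra.
  - rewrite nm_pos by lra. replace (b'-b') with 0 by ring. apply Rabs_R0.
Qed.
Lemma nm_bound u v u0 v0 : 0 <= u0 - v0 -> nm (u - v) <= Rabs (u - u0) + Rabs (v - v0).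
Proof.
  intros H. destruct (Rle_dec 0 (u - v)).
  - rewrite nm_pos by lra. pose proof (Rabs_pos (u-u0)); pose proof (Rabs_pos (v-v0)); lra.
  - rewrite nm_neg by lra. pose proof (Rle_abs (-(u-u0))). pose proof (Rle_abs (v-v0)).
    rewrite Rabs_Ropp in H0. lra.
Qed.

Lemma Rabs_min_le a b M : Rabs a <= M -> Rabs b <= M -> Rabs (Rmin a b) <= M.
Proof. intros; unfold Rmin; destruct (Rle_dec a b); auto. Qed.

Lemma comparison (F1 F2 : R -> R -> R)
  (Hm1 : forall a b b', b <= b' -> F1 a b <= F1 a b')
  (Hm2 : forall a a' b, a <= a' -> F2 a b <= F2 a' b)
  (Hlip : forall M, exists L, 0 <= L /\ forall a b a' b',
    Rabs a <= M -> Rabs b <= M -> Rabs a' <= M -> Rabs b' <= M ->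
    Rabs (F1 a b - F1 a' b') <= L * (Rabs (a - a') + Rabs (b - b')) /\
    Rabs (F2 a b - F2 a' b') <= L * (Rabs (a - a') + Rabs (b - b')))
  (T : R) (x1 x2 y1 y2 dx1 dx2 dy1 dy2 : R -> R) :
  0 < T -> RC x1 -> RC x2 -> RC y1 -> RC y2 ->
  (forall t, 0 < t <= T -> is_derive x1 t (dx1 t) /\ is_derive x2 t (dx2 t) /\
                          is_derive y1 t (dy1 t) /\ is_derive y2 t (dy2 t)) ->
  (forall t, 0 < t <= T -> F1 (x1 t) (x2 t) <= dx1 t /\ F2 (x1 t) (x2 t) <= dx2 t /\
                          dy1 t <= F1 (y1 t) (y2 t) /\ dy2 t <= F2 (y1 t) (y2 t)) ->
  y1 0 <= x1 0 -> y2 0 <= x2 0 ->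
  forall t, 0 <= t <= T -> y1 t <= x1 t /\ y2 t <= x2 t.
Proof.
  intros HT Rx1 Rx2 Ry1 Ry2 Hd Hs H01 H02.
  destruct (bounded_RC x1 T HT Rx1) as [M1 HM1].
  { intros t Ht; eexists; exact (proj1 (Hd t Ht)). }
  destruct (bounded_RC x2 T HT Rx2) as [M2 HM2].
  { intros t Ht; eexists; exact (proj1 (proj2 (Hd t Ht))). }
  destruct (bounded_RC y1 T HT Ry1) as [M3 HM3].
  { intros t Ht; eexists; exact (proj1 (proj2 (proj2 (Hd t Ht)))). }
  destruct (bounded_RC y2 T HT Ry2) as [M4 HM4].
  { intros t Ht; eexists; exact (proj2 (proj2 (proj2 (Hd t Ht)))). }
  set (M := Rmax (Rmax M1 M2) (Rmax M3 M4)).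
  assert (HB : forall t, 0 <= t <= T -> Rabs (x1 t) <= M /\ Rabs (x2 t) <= M /\
     Rabs (y1 t) <= M /\ Rabs (y2 t) <= M).
  { intros t Ht. specialize (HM1 t Ht); specialize (HM2 t Ht); specialize (HM3 t Ht);
    specialize (HM4 t Ht). unfold M.
    pose proof (Rmax_l M1 M2); pose proof (Rmax_r M1 M2);
    pose proof (Rmax_l M3 M4); pose proof (Rmax_r M3 M4);
    pose proof (Rmax_l (Rmax M1 M2) (Rmax M3 M4)); pose proof (Rmax_r (Rmax M1 M2) (Rmax M3 M4)).
    repeat split; lra. }
  destruct (Hlip M) as [L [HL HLip]].
  set (N := fun t => gg (x1 t - y1 t) + gg (x2 t - y2 t)).
  set (W := fun t => N t * exp (-(4*L) * t)).
  set (n1 := fun t => nm (x1 t - y1 t)).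
  set (n2 := fun t => nm (x2 t - y2 t)).
  set (wd := fun t => (-2 * n1 t * (dx1 t - dy1 t) + -2 * n2 t * (dx2 t - dy2 t)) * exp (-(4*L) * t)
                      + N t * (-(4*L) * exp (-(4*L) * t))).
  assert (HW : forall t, 0 < t <= T -> is_derive W t (wd t)).
  { intros t Ht. destruct (Hd t Ht) as [d1 [d2 [d3 d4]]].
    unfold W, wd.
    apply (dR_mult N (fun t => exp (-(4*L)*t))).
    - unfold N. replace (-2 * n1 t * (dx1 t - dy1 t) + -2 * n2 t * (dx2 t - dy2 t)) with
        ((dx1 t - dy1 t) * (-2 * nm (x1 t - y1 t)) + (dx2 t - dy2 t) * (-2 * nm (x2 t - y2 t)))
        by (unfold n1, n2; ring).
      apply (dR_plus (fun t => gg (x1 t - y1 t)) (fun t => gg (x2 t - y2 t))).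
      + apply (dR_comp (fun t => x1 t - y1 t) gg). apply gg_derive. apply dR_minus; auto.
      + apply (dR_comp (fun t => x2 t - y2 t) gg). apply gg_derive. apply dR_minus; auto.
    - replace (-(4*L) * exp (-(4*L) * t)) with (-(4*L) * 1 * exp (-(4*L) * t)) by ring.
      apply (dR_comp (fun t => -(4*L) * t) exp).
      exact (is_derive_exp (-(4*L) * t)).
      apply is_derive_scal. apply (is_derive_id (K:=R_AbsRing)). }
  assert (HA1 : forall t, 0 < t <= T -> n1 t * (dx1 t - dy1 t) >= - L * n1 t * (n1 t + n2 t)).
  { intros t Ht. unfold n1, n2.
    destruct (Rle_dec 0 (x1 t - y1 t)).
    - rewrite nm_pos by lra. lra.
    - destruct (Hs t Ht) as [s1 [s2 [s3 s4]]].
      destruct (HB t (conj (Rlt_le _ _ (proj1 Ht)) (proj2 Ht))) as [b1 [b2 [b3 b4]]].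
      assert (E1 : F1 (x1 t) (Rmin (x2 t) (y2 t)) <= F1 (x1 t) (x2 t)) by (apply Hm1; apply Rmin_l).
      destruct (HLip (x1 t) (Rmin (x2 t) (y2 t)) (y1 t) (y2 t) b1 (Rabs_min_le _ _ _ b2 b4) b3 b4) as [E2 _].
      rewrite nm_min in E2.
      rewrite (Rabs_left (x1 t - y1 t)) in E2 by lra. rewrite (nm_neg (x1 t - y1 t)) in * by lra.
      apply Rabs_le_between in E2.
      assert (dx1 t - dy1 t >= - L * (- (x1 t - y1 t) + nm (x2 t - y2 t))) by lra.
      assert (0 <= - (x1 t - y1 t)) by lra.
      apply Rle_ge. 
      replace (- L * - (x1 t - y1 t) * (- (x1 t - y1 t) + nm (x2 t - y2 t))) with
         (- (x1 t - y1 t) * (- L * (- (x1 t - y1 t) + nm (x2 t - y2 t)))) by ring.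
      apply Rmult_le_compat_l; lra. }
  assert (HA2 : forall t, 0 < t <= T -> n2 t * (dx2 t - dy2 t) >= - L * n2 t * (n1 t + n2 t)).
  { intros t Ht. unfold n1, n2.
    destruct (Rle_dec 0 (x2 t - y2 t)).
    - rewrite (nm_pos (x2 t - y2 t)) by lra. lra.
    - destruct (Hs t Ht) as [s1 [s2 [s3 s4]]].
      destruct (HB t (conj (Rlt_le _ _ (proj1 Ht)) (proj2 Ht))) as [b1 [b2 [b3 b4]]].
      assert (E1 : F2 (Rmin (x1 t) (y1 t)) (x2 t) <= F2 (x1 t) (x2 t)) by (apply Hm2; apply Rmin_l).
      destruct (HLip (Rmin (x1 t) (y1 t)) (x2 t) (y1 t) (y2 t) (Rabs_min_le _ _ _ b1 b3) b2 b3 b4) as [_ E2].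
      rewrite nm_min in E2.
      rewrite (Rabs_left (x2 t - y2 t)) in E2 by lra. rewrite (nm_neg (x2 t - y2 t)) in * by lra.
      apply Rabs_le_between in E2.
      assert (dx2 t - dy2 t >= - L * (nm (x1 t - y1 t) + - (x2 t - y2 t))) by lra.
      assert (0 <= - (x2 t - y2 t)) by lra.
      apply Rle_ge. 
      replace (- L * - (x2 t - y2 t) * (nm (x1 t - y1 t) + - (x2 t - y2 t))) with
         (- (x2 t - y2 t) * (- L * (nm (x1 t - y1 t) + - (x2 t - y2 t)))) by ring.
      apply Rmult_le_compat_l; lra. }
  assert (Hwd : forall t, 0 < t <= T -> wd t <= 0).
  { intros t Ht. specialize (HA1 t Ht). specialize (HA2 t Ht). unfold wd, N.
    fold (n1 t) (n2 t). unfold gg. fold (n1 t) (n2 t).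
    assert (Hp := exp_pos (-(4*L) * t)).
    set (e := exp (-(4*L) * t)) in *.
    replace ((-2 * n1 t * (dx1 t - dy1 t) + -2 * n2 t * (dx2 t - dy2 t)) * e +
             (n1 t * n1 t + n2 t * n2 t) * (- (4 * L) * e))
      with (e * (-2 * (n1 t * (dx1 t - dy1 t)) - 2 * (n2 t * (dx2 t - dy2 t))
                  - 4 * L * (n1 t * n1 t + n2 t * n2 t))) by ring.
    assert (-2 * (n1 t * (dx1 t - dy1 t)) - 2 * (n2 t * (dx2 t - dy2 t))
                  - 4 * L * (n1 t * n1 t + n2 t * n2 t) <= 0).
    { assert (0 <= L * ((n1 t - n2 t) * (n1 t - n2 t))) by (apply Rmult_le_pos; [lra | apply Rle_0_sqr]).
      assert (Id: - L * n1 t * (n1 t + n2 t) + - L * n2 t * (n1 t + n2 t) + 2 * L * (n1 t * n1 t + n2 t * n2 t) = L * ((n1 t - n2 t) * (n1 t - n2 t))) by ring.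
      lra. }
    assert (0 <= e * (- (-2 * (n1 t * (dx1 t - dy1 t)) - 2 * (n2 t * (dx2 t - dy2 t))
                  - 4 * L * (n1 t * n1 t + n2 t * n2 t)))) by (apply Rmult_le_pos; lra).
    lra. }
  assert (Hmono : forall s t, 0 < s -> s <= t -> t <= T -> W t <= W s).
  { intros s t Hs0 Hst HtT.
    destruct (MVT_gen W s t wd) as [c [Hc Heq]].
    - intros x Hx. rewrite Rmin_left in Hx by lra. rewrite Rmax_right in Hx by lra.
      apply HW; lra.
    - intros x Hx. rewrite Rmin_left in Hx by lra. rewrite Rmax_right in Hx by lra.
      apply cpt_of_derive. eexists. apply HW; lra.
    - rewrite Rmin_left in Hc by lra. rewrite Rmax_right in Hc by lra.
      assert (wd c <= 0) by (apply Hwd; lra).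
      assert (wd c * (t - s) <= 0) by (apply Rmult_le_0_r; lra). lra. }
  assert (HWnn : forall t, 0 <= W t).
  { intros t. unfold W, N, gg. apply Rmult_le_pos; [|apply Rlt_le, exp_pos]. nra. }
  assert (HW0 : forall t, 0 < t <= T -> W t <= 0).
  { intros t Ht. destruct (Rle_dec (W t) 0) as [|Hn]; auto. exfalso.
    assert (Wp : 0 < W t) by lra.
    set (e := Rmin 1 (W t / 16)).
    assert (He : 0 < e) by (apply Rmin_pos; lra).
    assert (He1 : e <= 1) by apply Rmin_l.
    assert (He2 : e <= W t / 16) by apply Rmin_r.
    destruct (Rx1 e He) as [d1 [d1p D1]].
    destruct (Rx2 e He) as [d2 [d2p D2]].
    destruct (Ry1 e He) as [d3 [d3p D3]].
    destruct (Ry2 e He) as [d4 [d4p D4]].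
    set (s := Rmin (Rmin d1 d2) (Rmin (Rmin d3 d4) t) / 2).
    assert (Hmin : 0 < Rmin (Rmin d1 d2) (Rmin (Rmin d3 d4) t)).
    { repeat apply Rmin_pos; lra. }
    assert (s1 : s < d1 /\ s < d2 /\ s < d3 /\ s < d4 /\ s < t).
    { unfold s. pose proof (Rmin_l (Rmin d1 d2) (Rmin (Rmin d3 d4) t)).
      pose proof (Rmin_r (Rmin d1 d2) (Rmin (Rmin d3 d4) t)).
      pose proof (Rmin_l d1 d2). pose proof (Rmin_r d1 d2).
      pose proof (Rmin_l (Rmin d3 d4) t). pose proof (Rmin_r (Rmin d3 d4) t).
      pose proof (Rmin_l d3 d4). pose proof (Rmin_r d3 d4). lra. }
    assert (s0 : 0 < s) by (unfold s; lra).
    assert (Hts : W t <= W s) by (apply Hmono; lra).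
    assert (b1 : Rabs (x1 s - x1 0) < e) by (apply D1; lra).
    assert (b2 : Rabs (x2 s - x2 0) < e) by (apply D2; lra).
    assert (b3 : Rabs (y1 s - y1 0) < e) by (apply D3; lra).
    assert (b4 : Rabs (y2 s - y2 0) < e) by (apply D4; lra).
    pose proof (nm_bound (x1 s) (y1 s) (x1 0) (y1 0) ltac:(lra)) as n1b.
    pose proof (nm_bound (x2 s) (y2 s) (x2 0) (y2 0) ltac:(lra)) as n2b.
    pose proof (nm_nonneg (x1 s - y1 s)). pose proof (nm_nonneg (x2 s - y2 s)).
    assert (Nb : N s < 8 * e * e).
    { unfold N, gg.
      assert (nm (x1 s - y1 s) < 2 * e) by lra.
      assert (nm (x2 s - y2 s) < 2 * e) by lra. nra. }
    assert (WN : W s <= N s).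
    { unfold W. assert (0 <= N s) by (unfold N, gg; nra).
      assert (exp (-(4*L)*s) <= 1).
      { rewrite <- exp_0. destruct (Req_dec L 0).
        - subst. right. f_equal. ring.
        - left. apply exp_increasing. assert (0 < L) by lra. nra. }
      nra. }
    nra. }
  intros t Ht. destruct (Req_dec t 0).
  - subst; auto.
  - assert (Ht' : 0 < t <= T) by lra.
    specialize (HW0 t Ht'). specialize (HWnn t).
    assert (WZ : W t = 0) by lra.
    unfold W in WZ. apply Rmult_integral in WZ. destruct WZ as [WZ|WZ].
    2: { pose proof (exp_pos (-(4*L)*t)). lra. }
    unfold N, gg in WZ.
    pose proof (nm_nonneg (x1 t - y1 t)). pose proof (nm_nonneg (x2 t - y2 t)).
    assert (nm (x1 t - y1 t) = 0) by nra.
    assert (nm (x2 t - y2 t) = 0) by nra.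
    split.
    + destruct (Rle_dec 0 (x1 t - y1 t)); [lra|]. rewrite nm_neg in H2 by lra. lra.
    + destruct (Rle_dec 0 (x2 t - y2 t)); [lra|]. rewrite nm_neg in H3 by lra. lra.
Qed.

Lemma f1_mono ga lam q sB ea ba a b b' : 0 < ga -> 0 <= lam -> 0 < sB -> 0 < ea ->
  b <= b' -> f1 ga lam q sB ea ba a b <= f1 ga lam q sB ea ba a b'.
Proof.
  intros Hga Hl HsB Hea Hb. unfold f1.
  apply Rmult_le_compat_l. left; apply Rinv_0_lt_compat; lra.
  pose proof (phi_mono b b' Hb). unfold phi in H.
  assert (0 <= ea * sB) by (apply Rmult_le_pos; lra).
  assert (ea * sB * (Rabs b ^ 3 * b) <= ea * sB * (Rabs b' ^ 3 * b')) by (apply Rmult_le_compat_l; lra).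
  assert (lam * b <= lam * b') by (apply Rmult_le_compat_l; lra).
  lra.
Qed.

Lemma f2_mono gs lam q sB ea bs a a' b : 0 < gs -> 0 <= lam -> 0 < sB -> 0 < ea ->
  a <= a' -> f2 gs lam q sB ea bs a b <= f2 gs lam q sB ea bs a' b.
Proof.
  intros Hga Hl HsB Hea Hb. unfold f2.
  apply Rmult_le_compat_l. left; apply Rinv_0_lt_compat; lra.
  pose proof (phi_mono a a' Hb). unfold phi in H.
  assert (0 <= ea * sB) by (apply Rmult_le_pos; lra).
  assert (ea * sB * (Rabs a ^ 3 * a) <= ea * sB * (Rabs a' ^ 3 * a')) by (apply Rmult_le_compat_l; lra).
  assert (lam * a <= lam * a') by (apply Rmult_le_compat_l; lra).
  lra.
Qed.

Lemma lip_abs (b : R -> R) : globally_lipschitz b -> exists L, 0 <= L /\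
  forall x y, Rabs (b x - b y) <= L * Rabs (x - y).
Proof.
  intros [L HL]. exists (Rabs L). split. apply Rabs_pos.
  intros x y. eapply Rle_trans. apply HL. apply Rmult_le_compat_r. apply Rabs_pos. apply Rle_abs.
Qed.

Lemma mul_bound c u K : 0 <= c -> Rabs u <= K -> - (c * K) <= c * u <= c * K.
Proof.
  intros Hc Hu. apply Rabs_le_between in Hu. destruct Hu.
  split.
  - replace (- (c*K)) with (c * (-K)) by ring. apply Rmult_le_compat_l; lra.
  - apply Rmult_le_compat_l; lra.
Qed.

Lemma f1_lip ga lam q sB ea ba La M a b a' b' : 0 < ga -> 0 <= lam -> 0 < q -> 0 < sB -> 0 < ea ->
  0 <= La -> (forall x y, Rabs (ba x - ba y) <= La * Rabs (x - y)) ->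
  Rabs a <= M -> Rabs b <= M -> Rabs a' <= M -> Rabs b' <= M ->
  Rabs (f1 ga lam q sB ea ba a b - f1 ga lam q sB ea ba a' b') <=
  (/ ga * (lam + 3 * (ea * sB) * (4 * M ^ 3) + q * La)) * (Rabs (a - a') + Rabs (b - b')).
Proof.
  intros Hga Hl Hq HsB Hea HLa HL Ha Hb Ha' Hb'. unfold f1.
  rewrite <- Rmult_minus_distr_l, Rabs_mult, Rabs_pos_eq by (left; apply Rinv_0_lt_compat; lra).
  rewrite (Rmult_assoc (/ ga)). apply Rmult_le_compat_l. left; apply Rinv_0_lt_compat; lra.
  pose proof (phi_lip a a' M Ha Ha') as Pa. pose proof (phi_lip b b' M Hb Hb') as Pb.
  unfold phi in Pa, Pb.
  assert (Hc : 0 <= ea * sB) by (apply Rmult_le_pos; lra).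
  pose proof (mul_bound _ _ _ Hc Pa) as Ba.
  pose proof (mul_bound _ _ _ Hc Pb) as Bb.
  pose proof (mul_bound q _ _ (Rlt_le _ _ Hq) (HL a a')) as Bq.
  pose proof (mul_bound lam (a - a') _ Hl (Rle_refl _)) as Bl1.
  pose proof (mul_bound lam (b - b') _ Hl (Rle_refl _)) as Bl2.
  pose proof (Rabs_pos (a - a')). pose proof (Rabs_pos (b - b')).
  assert (0 <= ea * sB * (4 * M^3) * Rabs (a - a')).
  { apply Rmult_le_pos; auto. apply Rmult_le_pos; auto. pose proof (Rabs_pos a).
    assert (0 <= M^3) by (apply pow_le; lra). lra. }
  assert (0 <= ea * sB * (4 * M^3) * Rabs (b - b')).
  { apply Rmult_le_pos; auto. apply Rmult_le_pos; auto. pose proof (Rabs_pos a).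
    assert (0 <= M^3) by (apply pow_le; lra). lra. }
  assert (0 <= q * (La * Rabs (a - a'))) by (apply Rmult_le_pos; [lra|]; apply Rmult_le_pos; auto).
  assert (0 <= q * (La * Rabs (b - b'))) by (apply Rmult_le_pos; [lra|]; apply Rmult_le_pos; auto).
  apply Rabs_le. split; lra.
Qed.

Lemma f2_lip gs lam q sB ea bs Ls M a b a' b' : 0 < gs -> 0 <= lam -> 0 < q -> 0 < sB -> 0 < ea < 2 ->
  0 <= Ls -> (forall x y, Rabs (bs x - bs y) <= Ls * Rabs (x - y)) ->
  Rabs a <= M -> Rabs b <= M -> Rabs a' <= M -> Rabs b' <= M ->
  Rabs (f2 gs lam q sB ea bs a b - f2 gs lam q sB ea bs a' b') <=
  (/ gs * (lam + 3 * sB * (4 * M ^ 3) + q * Ls)) * (Rabs (a - a') + Rabs (b - b')).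
Proof.
  intros Hga Hl Hq HsB Hea HLa HL Ha Hb Ha' Hb'. unfold f2.
  rewrite <- Rmult_minus_distr_l, Rabs_mult, Rabs_pos_eq by (left; apply Rinv_0_lt_compat; lra).
  rewrite (Rmult_assoc (/ gs)). apply Rmult_le_compat_l. left; apply Rinv_0_lt_compat; lra.
  pose proof (phi_lip a a' M Ha Ha') as Pa. pose proof (phi_lip b b' M Hb Hb') as Pb.
  unfold phi in Pa, Pb.
  assert (Hc : 0 <= ea * sB) by (apply Rmult_le_pos; lra).
  pose proof (mul_bound _ _ _ Hc Pa) as Ba.
  pose proof (mul_bound sB _ _ (Rlt_le _ _ HsB) Pb) as Bb.
  pose proof (mul_bound q _ _ (Rlt_le _ _ Hq) (HL b b')) as Bq.
  pose proof (mul_bound lam (a - a') _ Hl (Rle_refl _)) as Bl1.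
  pose proof (mul_bound lam (b - b') _ Hl (Rle_refl _)) as Bl2.
  pose proof (Rabs_pos (a - a')). pose proof (Rabs_pos (b - b')).
  assert (HM3 : 0 <= M^3) by (pose proof (Rabs_pos a); apply pow_le; lra).
  assert (0 <= sB * (4 * M^3) * Rabs (a - a')).
  { apply Rmult_le_pos; auto. apply Rmult_le_pos; lra. }
  assert (0 <= sB * (4 * M^3) * Rabs (b - b')).
  { apply Rmult_le_pos; auto. apply Rmult_le_pos; lra. }
  assert (0 <= (2 - ea) * (sB * (4 * M^3) * Rabs (a - a'))) by (apply Rmult_le_pos; lra).
  assert (0 <= q * (Ls * Rabs (a - a'))) by (apply Rmult_le_pos; [lra|]; apply Rmult_le_pos; auto).
  assert (0 <= q * (Ls * Rabs (b - b'))) by (apply Rmult_le_pos; [lra|]; apply Rmult_le_pos; auto).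
  apply Rabs_le. split; lra.
Qed.

Lemma RC_const c : RC (fun _ => c).
Proof. intros e He. exists 1. split. lra. intros. rewrite Rminus_diag, Rabs_R0. auto. Qed.

Lemma RC_shift f h : ex_derive f h -> RC (fun u => f (u + h)).
Proof.
  intros Hd e He. destruct (cont_eps f h Hd e He) as [d [Hd0 Hd1]].
  exists d. split; auto. intros s Hs. rewrite Rplus_0_l. apply Hd1.
  replace (s + h - h) with s by ring. rewrite Rabs_pos_eq; lra.
Qed.

Lemma Rbar_lt_le (t T : R) (tau : Rbar) : Rbar_lt T tau -> t <= T -> Rbar_lt t tau.
Proof. destruct tau; simpl; auto; lra. Qed.

Lemma const_derive (c t : R) : is_derive (fun _ : R => c) t 0.
Proof. exact (is_derive_const (V:=R_NormedModule) c t). Qed.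

Theorem lemma4p5
  (ga gs lam q sB ea : R) (ba bs : R -> R)
  (Hga : 0 < ga) (Hgs : 0 < gs) (Hlam : 0 <= lam) (Hq : 0 < q) (HsB : 0 < sB)
  (Hea : 0 < ea < 2)
  (Hba_lip : globally_lipschitz ba) (Hbs_lip : globally_lipschitz bs)
  (Hba_nn : forall x : R, 0 <= ba x) (Hbs_pos : forall x : R, 0 < bs x)
  (tau : Rbar) (Htau : Rbar_lt 0 tau) (Ta0 Ts0 : R) (Ta Ts : R -> R)
  (Hsol : is_solution ga gs lam q sB ea ba bs tau Ta0 Ts0 Ta Ts) :
  (P_plus ga gs lam q sB ea ba bs Ta0 Ts0 ->
     forall s t : R, 0 <= s -> s <= t -> Rbar_lt t tau ->
       Ta s <= Ta t /\ Ts s <= Ts t) /\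
  (P_minus ga gs lam q sB ea ba bs Ta0 Ts0 ->
     forall s t : R, 0 <= s -> s <= t -> Rbar_lt t tau ->
       Ta t <= Ta s /\ Ts t <= Ts s).
Proof.
  destruct Hsol as [E0a [E0s [Ca [Cs Hder]]]].
  set (F1 := f1 ga lam q sB ea ba). set (F2 := f2 gs lam q sB ea bs).
  assert (Hm1 : forall a b b', b <= b' -> F1 a b <= F1 a b').
  { intros; apply f1_mono; lra. }
  assert (Hm2 : forall a a' b, a <= a' -> F2 a b <= F2 a' b).
  { intros; apply f2_mono; lra. }
  destruct (lip_abs ba Hba_lip) as [La [HLa HLa']].
  destruct (lip_abs bs Hbs_lip) as [Ls [HLs HLs']].
  assert (Hlip : forall M, exists L, 0 <= L /\ forall a b a' b',
    Rabs a <= M -> Rabs b <= M -> Rabs a' <= M -> Rabs b' <= M ->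
    Rabs (F1 a b - F1 a' b') <= L * (Rabs (a - a') + Rabs (b - b')) /\
    Rabs (F2 a b - F2 a' b') <= L * (Rabs (a - a') + Rabs (b - b'))).
  { intros M.
    destruct (Rle_dec 0 M) as [HM|HM].
    2: { exists 0. split. lra. intros a b a' b' Ha. pose proof (Rabs_pos a). lra. }
    assert (HM3 : 0 <= M^3) by (apply pow_le; lra).
    set (C1 := / ga * (lam + 3 * (ea * sB) * (4 * M ^ 3) + q * La)).
    set (C2 := / gs * (lam + 3 * sB * (4 * M ^ 3) + q * Ls)).
    assert (0 <= C1).
    { unfold C1. apply Rmult_le_pos. left; apply Rinv_0_lt_compat; lra.
      assert (0 <= ea * sB) by (apply Rmult_le_pos; lra).
      assert (0 <= 3 * (ea * sB) * (4 * M^3)) by (apply Rmult_le_pos; lra).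
      assert (0 <= q * La) by (apply Rmult_le_pos; lra). lra. }
    assert (0 <= C2).
    { unfold C2. apply Rmult_le_pos. left; apply Rinv_0_lt_compat; lra.
      assert (0 <= 3 * sB * (4 * M^3)) by (apply Rmult_le_pos; lra).
      assert (0 <= q * Ls) by (apply Rmult_le_pos; lra). lra. }
    exists (C1 + C2). split. lra.
    intros a b a' b' Ha Hb Ha' Hb'.
    pose proof (Rabs_pos (a - a')). pose proof (Rabs_pos (b - b')).
    assert (0 <= C2 * (Rabs (a - a') + Rabs (b - b'))) by (apply Rmult_le_pos; lra).
    assert (0 <= C1 * (Rabs (a - a') + Rabs (b - b'))) by (apply Rmult_le_pos; lra).
    split.
    - eapply Rle_trans. apply (f1_lip ga lam q sB ea ba La M); auto; lra.
      fold C1. rewrite Rmult_plus_distr_r. lra.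
    - eapply Rle_trans. apply (f2_lip gs lam q sB ea bs Ls M); auto; lra.
      fold C2. rewrite Rmult_plus_distr_r. lra. }
  assert (RTa : RC Ta) by (apply RC_of_filterlim; auto).
  assert (RTs : RC Ts) by (apply RC_of_filterlim; auto).
  assert (Dsol : forall t, 0 < t -> Rbar_lt t tau ->
    is_derive Ta t (F1 (Ta t) (Ts t)) /\ is_derive Ts t (F2 (Ta t) (Ts t))).
  { intros t H1 H2. apply Hder; auto. }
  assert (Dshift : forall h T u, 0 < h -> Rbar_lt (T + h) tau -> 0 < u <= T ->
     is_derive (fun v => Ta (v + h)) u (F1 (Ta (u + h)) (Ts (u + h))) /\
     is_derive (fun v => Ts (v + h)) u (F2 (Ta (u + h)) (Ts (u + h)))).
  { intros h T u Hh HT Hu. destruct (Dsol (u + h)) as [D1 D2]. lra.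
    apply (Rbar_lt_le _ (T + h)); auto; lra.
    split; apply dR_shift; auto. }
  assert (RCsh : forall h, 0 < h -> Rbar_lt h tau -> RC (fun v => Ta (v + h)) /\ RC (fun v => Ts (v + h))).
  { intros h Hh Ht. destruct (Dsol h Hh Ht) as [D1 D2]. split; apply RC_shift; eexists; eauto. }
  split.
  - intros [HP1 [HP2 [HP3 HP4]]].
    assert (Step1 : forall T, 0 < T -> Rbar_lt T tau -> forall u, 0 <= u <= T -> Ta0 <= Ta u /\ Ts0 <= Ts u).
    { intros T HT HTt.
      apply (comparison F1 F2 Hm1 Hm2 Hlip T Ta Ts (fun _ => Ta0) (fun _ => Ts0)
        (fun u => F1 (Ta u) (Ts u)) (fun u => F2 (Ta u) (Ts u)) (fun _ => 0) (fun _ => 0)); auto.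
      + apply RC_const.
      + apply RC_const.
      + intros u Hu. destruct (Dsol u) as [D1 D2]. lra. apply (Rbar_lt_le _ T); auto; lra.
        split; [exact D1|split; [exact D2|split; apply const_derive]].
      + intros u Hu. repeat split; try apply Rle_refl. exact HP3. exact HP4.
      + lra.
      + lra. }
    intros s t Hs Hst Ht.
    destruct (Req_dec s t) as [->|Hne]. split; apply Rle_refl.
    destruct (Req_dec s 0) as [->|Hs0].
    + rewrite E0a, E0s. apply (Step1 t); auto; lra.
    + set (h := t - s).
      assert (Hh : 0 < h) by (unfold h; lra).
      assert (Hht : Rbar_lt h tau) by (apply (Rbar_lt_le _ t); auto; unfold h; lra).
      destruct (RCsh h Hh Hht) as [R1 R2].
      destruct (Step1 h Hh Hht h) as [I1 I2]. lra.
      pose proof (comparison F1 F2 Hm1 Hm2 Hlip s (fun v => Ta (v + h)) (fun v => Ts (v + h)) Ta Ts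
        (fun u => F1 (Ta (u + h)) (Ts (u + h))) (fun u => F2 (Ta (u + h)) (Ts (u + h)))
        (fun u => F1 (Ta u) (Ts u)) (fun u => F2 (Ta u) (Ts u))) as C.
      destruct C with (t := s) as [C1 C2]; auto.
      * lra.
      * intros u Hu. destruct (Dshift h s u Hh) as [D1 D2]; auto.
        replace (s + h) with t by (unfold h; ring). auto.
        destruct (Dsol u) as [D3 D4]. lra. apply (Rbar_lt_le _ t); auto; lra.
        split; [exact D1|split; [exact D2|split; [exact D3|exact D4]]].
      * intros u Hu. repeat split; apply Rle_refl.
      * rewrite Rplus_0_l, E0a. exact I1.
      * rewrite Rplus_0_l, E0s. exact I2.
      * lra.
      * replace (s + h) with t in C1, C2 by (unfold h; ring). auto.
  - intros [HP1 [HP2 [HP3 HP4]]].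
    assert (Step1 : forall T, 0 < T -> Rbar_lt T tau -> forall u, 0 <= u <= T -> Ta u <= Ta0 /\ Ts u <= Ts0).
    { intros T HT HTt.
      apply (comparison F1 F2 Hm1 Hm2 Hlip T (fun _ => Ta0) (fun _ => Ts0) Ta Ts
        (fun _ => 0) (fun _ => 0) (fun u => F1 (Ta u) (Ts u)) (fun u => F2 (Ta u) (Ts u))); auto.
      + apply RC_const.
      + apply RC_const.
      + intros u Hu. destruct (Dsol u) as [D1 D2]. lra. apply (Rbar_lt_le _ T); auto; lra.
        split; [apply const_derive|split; [apply const_derive|split; [exact D1|exact D2]]].
      + intros u Hu. repeat split; try apply Rle_refl. exact HP3. exact HP4.
      + lra.
      + lra. }
    intros s t Hs Hst Ht.
    destruct (Req_dec s t) as [->|Hne]. split; apply Rle_refl.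
    destruct (Req_dec s 0) as [->|Hs0].
    + rewrite E0a, E0s. apply (Step1 t); auto; lra.
    + set (h := t - s).
      assert (Hh : 0 < h) by (unfold h; lra).
      assert (Hht : Rbar_lt h tau) by (apply (Rbar_lt_le _ t); auto; unfold h; lra).
      destruct (RCsh h Hh Hht) as [R1 R2].
      destruct (Step1 h Hh Hht h) as [I1 I2]. lra.
      pose proof (comparison F1 F2 Hm1 Hm2 Hlip s Ta Ts (fun v => Ta (v + h)) (fun v => Ts (v + h))
        (fun u => F1 (Ta u) (Ts u)) (fun u => F2 (Ta u) (Ts u))
        (fun u => F1 (Ta (u + h)) (Ts (u + h))) (fun u => F2 (Ta (u + h)) (Ts (u + h)))) as C.
      destruct C with (t := s) as [C1 C2]; auto.
      * lra.
      * intros u Hu. destruct (Dshift h s u Hh) as [D1 D2]; auto.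
        replace (s + h) with t by (unfold h; ring). auto.
        destruct (Dsol u) as [D3 D4]. lra. apply (Rbar_lt_le _ t); auto; lra.
        split; [exact D3|split; [exact D4|split; [exact D1|exact D2]]].
      * intros u Hu. repeat split; apply Rle_refl.
      * rewrite Rplus_0_l, E0a. exact I1.
      * rewrite Rplus_0_l, E0s. exact I2.
      * lra.
      * replace (s + h) with t in C1, C2 by (unfold h; ring). auto.
Qed.
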